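(* For $0<R<1$, let $\mathbb G(R)$ be the unique solution in $(0,1)$ of the equation $G=1-e^{-G/R}$. Then for any choice of $\theta\ge1$, codes $\mathcal C=\{\mathscr C_1,\dots,\mathscr C_\theta\}$ and probability mass function $\boldsymbol\Lambda=(\Lambda_1,\dots,\Lambda_\theta)$ as in the context whose rate $k/\bar n$ equals $R$, the asymptotic threshold satisfies $$G^*(\mathcal C,\boldsymbol\Lambda)\le\mathbb G(R).$$
   Context: For $h=1,\dots,\theta$, $\mathscr C_h$ is an $(n_h,k)$ binary linear block code (common dimension $k$) with minimum distance $d_h\ge2$ and no idle symbols (no coordinate identically zero on the code); $\Lambda_h\ge0$, $\sum_h\Lambda_h=1$; $\bar n=\sum_h\Lambda_hn_h$ and the rate is $R=k/\bar n$. Un-normalized information function $\tilde e^{(h)}_g$ ($0\le g\le n_h$): the sum over all $g$-subsets of columns of a generator matrix of $\mathscr C_h$ of the rank of the corresponding $k\times g$ submatrix ($\tilde e_0=0$). For $G\ge0$ define $f_{\mathsf b}(p)=\frac1{\bar n}\sum_h\Lambda_h\sum_{t=0}^{n_h-1}p^t(1-p)^{n_h-1-t}[(n_h-t)\tilde e^{(h)}_{n_h-t}-(t+1)\tilde e^{(h)}_{n_h-1-t}]$, $f_{\mathsf s}(q)=1-\exp\{-\frac{G}{R}q\}$, and the recursion $p_\ell=f_{\mathsf s}(f_{\mathsf b}(p_{\ell-1}))$ with $p_0=1-e^{-G/R}$. The asymptotic threshold (capacity of the scheme) is $G^*(\mathcal C,\boldsymbol\Lambda)=\sup\{G\ge0: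 p_\ell\to0\text{ as }\ell\to\infty\}$. *)

(* Defs.v *)
From HB Require Import structures.
From mathcomp Require Import all_boot all_order all_algebra.
From Stdlib Require Import Reals.

Set Implicit Arguments.
Unset Strict Implicit.
Unset Printing Implicit Defensive.
Local Open Scope ring_scope.

Definition wt (n : nat) (v : 'rV['F_2]_n) : nat := #|[set j : 'I_n | v ord0 j != GRing.zero]|.

Definition has_dim (k n : nat) (Gm : 'M['F_2]_(k, n)) : Prop := \rank Gm = k.

Definition min_dist_ge (k n : nat) (Gm : 'M['F_2]_(k, n)) (d : nat) : Prop :=
  forall u : 'rV['F_2]_k, (u *m Gm) != GRing.zero -> (d <= wt (u *m Gm))%nat.

Definition no_idle (k n : nat) (Gm : 'M['F_2]_(k, n)) : Prop :=
  forall j : 'I_n, exists u : 'rV['F_2]_k, (u *m Gm) ord0 j != GRing.zero.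

Definition subcols (k n : nat) (Gm : 'M['F_2]_(k, n)) (S : {set 'I_n})
  : 'M['F_2]_(k, #|S|) := colsub (fun j : 'I_#|S| => enum_val j) Gm.

(* un-normalized information function: sum over all g-subsets S of columns
   of the rank of the corresponding submatrix *)
Definition etilde (k n : nat) (Gm : 'M['F_2]_(k, n)) (g : nat) : nat :=
  (\sum_(S : {set 'I_n} | #|S| == g) \rank (subcols Gm S))%nat.

Local Close Scope ring_scope.
Local Open Scope R_scope.

Definition nbar (theta : nat) (Lam : nat -> R) (n : nat -> nat) : R :=
  sum_f_R0 (fun h => Lam h * INR (n h)) (theta - 1).

Definition f_b (theta k : nat) (n : nat -> nat)
  (Gm : forall h : nat, 'M['F_2]_(k, n h)) (Lam : nat -> R) (p : R) : R :=
  / nbar theta Lam n *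
  sum_f_R0 (fun h => Lam h *
     sum_f_R0 (fun t =>
        p ^ t * (1 - p) ^ (n h - 1 - t) *
        (INR (n h - t) * INR (etilde (Gm h) (n h - t))
         - INR (t + 1) * INR (etilde (Gm h) (n h - 1 - t))))
       (n h - 1))
    (theta - 1).

Definition f_s (G Rr q : R) : R := 1 - exp (- (G / Rr) * q).

Fixpoint p_seq (theta k : nat) (n : nat -> nat)
  (Gm : forall h : nat, 'M['F_2]_(k, n h)) (Lam : nat -> R) (Rr G : R) (l : nat)
  : R :=
  match l with
  | O => 1 - exp (- (G / Rr))
  | S l' => f_s G Rr (f_b theta Gm Lam (p_seq theta Gm Lam Rr G l'))
  end.

(* the set whose supremum is the asymptotic threshold G*(C, Lambda) *)
Definition threshold_set (theta k : nat) (n : nat -> nat)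
  (Gm : forall h : nat, 'M['F_2]_(k, n h)) (Lam : nat -> R) (Rr : R) : R -> Prop :=
  fun G => 0 <= G /\ Un_cv (p_seq theta Gm Lam Rr G) 0.

(* Main.v *)
Require Import Defs.
From HB Require Import structures.
From mathcomp Require Import all_boot all_order all_algebra.
From Stdlib Require Import Reals.
From Coquelicot Require Import Coquelicot.
From mathcomp Require Import zify.
From Stdlib Require Import Lra Lia Classical.
Set Implicit Arguments. Unset Strict Implicit. Unset Printing Implicit Defensive.
Import GRing.Theory.
Section Comb.
Variables (k n : nat) (Gm : 'M['F_2]_(k, n)).

Definition V (S : {set 'I_n}) : 'M['F_2]_k := (\sum_(j in S) <<row j Gm^T>>)%MS.

Lemma row_le_V (S : {set 'I_n}) j : j \in S -> (row j Gm^T <= V S)%MS.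
Proof. by move=> Hj; apply: (sumsmx_sup j) => //; rewrite genmxE. Qed.

Lemma V_le (S : {set 'I_n}) m (W : 'M['F_2]_(m, k)) : (forall j, j \in S -> (row j Gm^T <= W)%MS) -> (V S <= W)%MS.
Proof. by move=> H; apply/sumsmx_subP => j Hj; rewrite genmxE; apply: H. Qed.

Lemma rank_subcols (S : {set 'I_n}) : \rank (subcols Gm S) = \rank (V S).
Proof.
rewrite -mxrank_tr /subcols trmx_mxsub.
apply: eqmx_rank; apply/andP; split.
  apply/row_subP => i; rewrite row_rowsub; apply: row_le_V; exact: enum_valP.
have H : forall j, j \in S -> (row j Gm^T <= rowsub (fun i : 'I_#|S| => enum_val i) Gm^T)%MS.
  move=> j Hj; rewrite -(enum_rankK_in Hj Hj) -row_rowsub; exact: row_sub.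
exact (V_le H).
Qed.

Definition rk S := \rank (V S).

Lemma rk_submod (A : {set 'I_n}) x y :
  (rk (x |: (y |: A)) + rk A <= rk (x |: A) + rk (y |: A))%nat.
Proof.
rewrite /rk -[X in (_ <= X)%nat]mxrank_sum_cap; apply: leq_add.
  apply: mxrankS; apply: V_le => j; rewrite !inE => /or3P [/eqP->| /eqP->| Hj].
  - apply: submx_trans (addsmxSl _ _); apply: row_le_V; by rewrite !inE eqxx.
  - apply: submx_trans (addsmxSr _ _); apply: row_le_V; by rewrite !inE eqxx.
  - apply: submx_trans (addsmxSl _ _); apply: row_le_V; by rewrite !inE Hj orbT.
apply: mxrankS; rewrite sub_capmx; apply/andP; split; apply: V_le => j Hj;
  apply: row_le_V; by rewrite !inE Hj orbT.
Qed.

End Comb.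
Lemma dc1 (T : finType) m (F : {set T} -> nat) :
  (\sum_(A : {set T} | #|A| == m) \sum_(x | x \notin A) F (x |: A) =
   m.+1 * \sum_(B : {set T} | #|B| == m.+1) F B)%nat.
Proof.
rewrite big_distrr /=.
rewrite [RHS](eq_bigr (fun B : {set T} => \sum_(x in B) F B)); last first.
  by move=> B /eqP HB; rewrite sum_nat_const HB.
rewrite (exchange_big_dep (fun _ => true)) //=.
rewrite [RHS](exchange_big_dep (fun _ => true)) //=.
apply: eq_bigr => x _.
rewrite [RHS](reindex_onto (fun A : {set T} => x |: A) (fun B : {set T} => B :\ x)) /=; last first.
  by move=> B /andP [_ HB]; rewrite setD1K.
apply: eq_bigl => A.
case: (boolP (x \in A)) => Hx /=.
  have -> : x |: A = A by apply/setUidPr; rewrite sub1set.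
  rewrite Hx andbF; symmetry.
  apply/negbTE/negP => /andP [_ /eqP HA].
  by move: Hx; rewrite -HA !inE eqxx.
by rewrite setU1K // eqxx cardsU1 Hx setU11 andbT andbT.
Qed.

Lemma cnt_notin (T : finType) (C : {set T}) c :
  (\sum_(y | y \notin C) c = (#|T| - #|C|) * c)%nat.
Proof.
rewrite (eq_bigl (fun y => y \in ~: C)); last by move=> y; rewrite inE.
by rewrite sum_nat_const -(cardsC C) addKn.
Qed.

Section Concave.
Variables (T : finType) (r : {set T} -> nat).
Hypothesis submod : forall A x y, (r (x |: (y |: A)) + r A <= r (x |: A) + r (y |: A))%nat.
Let N := #|T|.
Definition ee g := (\sum_(S : {set T} | #|S| == g) r S)%nat.

Lemma ee_concave g : (g.+2 <= N)%nat ->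
  (g.+2 * g.+1 * ee g.+2 + (N - g) * (N - g.+1) * ee g <= 2 * g.+1 * (N - g.+1) * ee g.+1)%nat.
Proof.
move=> Hg.
have S1 : (\sum_(A : {set T} | #|A| == g) \sum_(x | x \notin A) \sum_(y | y \notin x |: A)
   r (y |: (x |: A)) = g.+2 * g.+1 * ee g.+2)%nat.
  rewrite (dc1 g (fun C : {set T} => \sum_(y | y \notin C) r (y |: C))).
  rewrite (eq_bigr (fun C : {set T} => \sum_(y | y \notin C) r (y |: C))) //.
  rewrite (dc1 g.+1 r) /ee; nia.
have S2 : (\sum_(A : {set T} | #|A| == g) \sum_(x | x \notin A) \sum_(y | y \notin x |: A)
   r A = (N - g) * (N - g.+1) * ee g)%nat.
  rewrite /ee big_distrr /=; apply: eq_bigr => A /eqP HA.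
  rewrite (eq_bigr (fun x => (N - g.+1) * r A)%nat); last first.
    by move=> x Hx; rewrite cnt_notin cardsU1 Hx HA.
  by rewrite cnt_notin HA mulnA.
have S3 : (\sum_(A : {set T} | #|A| == g) \sum_(x | x \notin A) \sum_(y | y \notin x |: A)
   r (x |: A) = g.+1 * (N - g.+1) * ee g.+1)%nat.
  rewrite (eq_bigr (fun A : {set T} => \sum_(x | x \notin A) (N - g.+1) * r (x |: A))%nat); last first.
    move=> A /eqP HA; apply: eq_bigr => x Hx.
    by rewrite cnt_notin cardsU1 Hx HA.
  rewrite (dc1 g (fun C : {set T} => (N - g.+1) * r C)%nat) -big_distrr /ee /=; nia.
have S4 : (\sum_(A : {set T} | #|A| == g) \sum_(x | x \notin A) \sum_(y | y \notin x |: A)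
   r (y |: A) = g.+1 * (N - g.+1) * ee g.+1)%nat.
  rewrite -S3; apply: eq_bigr => A /eqP HA.
  rewrite (exchange_big_dep (fun y => y \notin A)) /=; last first.
    by move=> x y _; rewrite !inE negb_or => /andP [].
  rewrite [RHS](eq_bigr (fun x : T => (N - g.+1) * r (x |: A))%nat); last first.
    by move=> x Hx; rewrite cnt_notin cardsU1 Hx HA.
  apply: eq_bigr => y Hy.
  rewrite (eq_bigl (fun x => x \notin y |: A)); last first.
    move=> x; rewrite !inE !negb_or Hy andbT [y == x]eq_sym andbC //.
  by rewrite cnt_notin cardsU1 Hy HA.
rewrite (_ : 2 * g.+1 * (N - g.+1) * ee g.+1 = g.+1 * (N - g.+1) * ee g.+1 + g.+1 * (N - g.+1) * ee g.+1)%nat; last nia.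
rewrite -{1}S1 -S2 -{1}S3 -S4 -!big_split /=.
apply: leq_sum => A _; rewrite -!big_split /=; apply: leq_sum => x _.
rewrite -!big_split /=; apply: leq_sum => y _.
have := submod A y x; lia.
Qed.
End Concave.

Local Open Scope ring_scope.
Section Et.
Variables (k n : nat) (Gm : 'M['F_2]_(k, n)).

Lemma etilde_ee g : etilde Gm g = ee (rk Gm) g.
Proof. by apply: eq_bigr => S _; rewrite rank_subcols. Qed.

Lemma etilde0 : etilde Gm 0 = 0%nat.
Proof.
apply: big1 => S /eqP HS.
apply/eqP; rewrite -leqn0; apply: leq_trans (rank_leq_col _) _; by rewrite HS.
Qed.

Lemma etilde1 : (etilde Gm 1 <= n)%nat.
Proof.
apply: leq_trans (_ : (\sum_(S : {set 'I_n} | #|S| == 1%nat) 1 <= n)%nat).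
  apply: leq_sum => S /eqP HS; apply: leq_trans (rank_leq_col _) _; by rewrite HS.
rewrite sum1_card.
have -> : #|[pred S : {set 'I_n} | #|S| == 1%nat]| = #|[set S : {set 'I_n} | #|S| == 1%nat]|.
  by apply: eq_card => S; rewrite inE.
by rewrite card_draws card_ord bin1.
Qed.

Lemma etilden : etilde Gm n = \rank Gm.
Proof.
rewrite /etilde (big_pred1 setT); last first.
  move=> S /=; rewrite eqEcard subsetT cardsT card_ord /=.
  have H : (#|S| <= n)%nat by have := subset_leq_card (subsetT S); rewrite cardsT card_ord.
  by rewrite eqn_leq H.
rewrite rank_subcols -(mxrank_tr Gm); apply: eqmx_rank; apply/andP; split.
  apply: V_le => j _; exact: row_sub.
by apply/row_subP => j; apply: row_le_V; rewrite inE.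
Qed.

Lemma etilde_concave g : (g.+2 <= n)%nat ->
  (g.+2 * g.+1 * etilde Gm g.+2 + (n - g) * (n - g.+1) * etilde Gm g
     <= 2 * g.+1 * (n - g.+1) * etilde Gm g.+1)%nat.
Proof.
move=> Hg; rewrite !etilde_ee.
have := @ee_concave _ (rk Gm) (@rk_submod _ _ Gm) g.
by rewrite card_ord; apply.
Qed.
End Et.
Local Close Scope ring_scope.
Local Open Scope R_scope.
Unset Implicit Arguments.
Lemma dterm t j c x : derivable_pt_lim (fun p : R => p ^ t * (1-p) ^ j * c) x
  ((INR t * x ^ (Nat.pred t) * (1-x) ^ j - x ^ t * (INR j * (1-x) ^ (Nat.pred j))) * c).
Proof. apply is_derive_Reals. auto_derive; auto. replace (1 + - x) with (1 - x) by ring. set (A := x ^ Nat.pred t). set (B := (1-x) ^ j). set (C := (1-x) ^ Nat.pred j). set (D := x ^ t). ring. Qed.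

Lemma deriv_sum (f f' : nat -> R -> R) N x :
  (forall t, (t <= N)%nat -> derivable_pt_lim (f t) x (f' t x)) ->
  derivable_pt_lim (fun y => sum_f_R0 (fun t => f t y) N) x (sum_f_R0 (fun t => f' t x) N).
Proof.
induction N as [|N IH]; intros H.
- simpl. apply H. lia.
- simpl. apply (derivable_pt_lim_plus (fun y => sum_f_R0 (fun t => f t y) N) (f (S N))).
  + apply IH. intros t Ht. apply H. lia.
  + apply H. lia.
Qed.

Definition bern (a : nat -> R) (M : nat) (p : R) :=
  sum_f_R0 (fun t => p ^ t * (1 - p) ^ (M - t) * a t) M.

Lemma LA a m x : derivable_pt_lim (bern a (S m)) x
  (sum_f_R0 (fun t => x ^ t * (1 - x) ^ (m - t) *
     (INR (t + 1) * a (t + 1)%nat - INR (S m - t) * a t)) m).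
Proof.
set (P := fun t => INR t * x ^ (Nat.pred t) * (1-x) ^ (S m - t) * a t).
set (Q := fun t => x ^ t * (INR (S m - t) * (1-x) ^ (Nat.pred (S m - t))) * a t).
assert (Heq : sum_f_R0 (fun t => (INR t * x ^ (Nat.pred t) * (1-x) ^ (S m - t)
   - x ^ t * (INR (S m - t) * (1-x) ^ (Nat.pred (S m - t)))) * a t) (S m) =
  sum_f_R0 (fun t => x ^ t * (1 - x) ^ (m - t) *
     (INR (t + 1) * a (t + 1)%nat - INR (S m - t) * a t)) m).
{ rewrite (sum_eq _ (fun t => P t - Q t)); last first.
  { intros i _. unfold P, Q. apply Rmult_minus_distr_r. }
  rewrite minus_sum. rewrite (decomp_sum P); last lia. rewrite tech5.
  simpl Nat.pred.
  assert (HP0 : P 0%nat = 0). { unfold P. simpl. ring. }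
  assert (HQ : Q (S m) = 0). { unfold Q. rewrite subnn. simpl. ring. }
  rewrite HP0 HQ.
  rewrite Rplus_0_l Rplus_0_r -minus_sum.
  apply sum_eq. intros i Hi. unfold P, Q.
  rewrite subSS addn1.
  replace (Nat.pred (S m - i)) with (m - i)%nat by lia.
  replace (S m - i)%nat with (S (m - i)) by lia.
  simpl Nat.pred.
  set (A := x ^ i). set (B := (1-x) ^ (m-i)).
  ring. }
rewrite <- Heq. unfold bern.
apply (deriv_sum (fun t p => p ^ t * (1 - p) ^ (S m - t) * a t)
  (fun t p => (INR t * p ^ (Nat.pred t) * (1-p) ^ (S m - t) - p ^ t * (INR (S m - t) * (1-p) ^ (Nat.pred (S m - t)))) * a t) (S m) x).
intros t _. apply dterm.
Qed.
Lemma mono_of_deriv (f f' : R -> R) :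
  (forall x, derivable_pt_lim f x (f' x)) ->
  (forall x, 0 <= x <= 1 -> 0 <= f' x) ->
  forall p q, 0 <= p -> p <= q -> q <= 1 -> f p <= f q.
Proof.
intros Hd Hpos p q H0 Hpq H1.
destruct (Req_dec p q) as [->|Hne]; [lra|].
destruct (MVT_cor2 f f' p q) as [c [Hc1 Hc2]]; [lra| intros; apply Hd |].
assert (0 <= f' c) by (apply Hpos; lra).
assert (0 <= f' c * (q - p)) by (apply Rmult_le_pos; lra).
lra.
Qed.

Lemma sum_nonneg (f : nat -> R) N : (forall t, (t <= N)%nat -> 0 <= f t) -> 0 <= sum_f_R0 f N.
Proof.
induction N as [|N IH]; intros H; simpl.
- apply H; lia.
- apply Rplus_le_le_0_compat; [apply IH; intros; apply H; lia| apply H; lia].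
Qed.

Definition psi (e : nat -> R) (n : nat) (t : nat) :=
  INR (n - t) * e (n - t)%nat - INR (t + 1) * e (n - 1 - t)%nat.

Lemma dEb (e : nat -> R) n x : (0 < n)%nat ->
  derivable_pt_lim (bern (fun t => e (n - t)%nat) n) x (- bern (psi e n) (n - 1) x).
Proof.
intros Hn. destruct n as [|m]; [lia|].
replace (S m - 1)%nat with m by lia.
assert (H := LA (fun t => e (S m - t)%nat) m x).
assert (Hs : sum_f_R0 (fun t => x ^ t * (1 - x) ^ (m - t) *
     (INR (t + 1) * e (S m - (t + 1))%nat - INR (S m - t) * e (S m - t)%nat)) m
   + bern (psi e (S m)) m x = 0).
{ unfold bern. rewrite <- plus_sum. apply sum_eq_R0. intros t Ht.
  unfold psi. replace (S m - (t + 1))%nat with (S m - 1 - t)%nat by lia. ring. }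
replace (- bern (psi e (S m)) m x) with
  (sum_f_R0 (fun t => x ^ t * (1 - x) ^ (m - t) *
     (INR (t + 1) * e (S m - (t + 1))%nat - INR (S m - t) * e (S m - t)%nat)) m) by lra.
exact H.
Qed.

Lemma bern0 a M : bern a M 0 = a 0%nat.
Proof.
unfold bern. induction M as [|M IH].
- simpl. ring.
- rewrite tech5. rewrite (sum_eq _ (fun t => 0 ^ t * (1 - 0) ^ (M - t) * a t)).
  + rewrite IH. simpl. ring.
  + intros i Hi. rewrite Rminus_0_r !pow1. reflexivity.
Qed.

Lemma bern1 a M : bern a M 1 = a M.
Proof.
unfold bern. destruct M as [|M].
- simpl. ring.
- rewrite tech5. rewrite sum_eq_R0.
  + rewrite subnn. simpl. rewrite pow1. ring.
  + intros t Ht. replace (S M - t)%nat with (S (M - t)) by lia. simpl. ring.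
Qed.

Lemma phi_mono (e : nat -> R) n : (0 < n)%nat ->
  (forall g, (g + 2 <= n)%nat ->
     INR (g + 2) * INR (g + 1) * e (g + 2)%nat + INR (n - g) * INR (n - g - 1) * e g
     <= 2 * INR (g + 1) * INR (n - g - 1) * e (g + 1)%nat) ->
  forall p q, 0 <= p -> p <= q -> q <= 1 -> bern (psi e n) (n - 1) p <= bern (psi e n) (n - 1) q.
Proof.
intros Hn Hc p q H0 Hpq H1.
destruct n as [|[|m]]; [lia| |].
- unfold bern. simpl. lra.
- replace (S (S m) - 1)%nat with (S m) by lia.
  apply (mono_of_deriv _ (fun x => sum_f_R0 (fun t => x ^ t * (1 - x) ^ (m - t) *
     (INR (t + 1) * psi e (S (S m)) (t + 1)%nat - INR (S m - t) * psi e (S (S m)) t)) m)); auto.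
  + intros x. apply LA.
  + intros x Hx. apply sum_nonneg. intros t Ht.
    * apply Rmult_le_pos; [apply Rmult_le_pos; apply pow_le; lra|].
      set (g := (m - t)%nat).
      specialize (Hc g ltac:(lia)).
      unfold psi.
      replace (S (S m) - (t + 1))%nat with (g + 1)%nat by lia.
      replace (S (S m) - 1 - (t + 1))%nat with g by lia.
      replace (S (S m) - t)%nat with (g + 2)%nat by lia.
      replace (S (S m) - 1 - t)%nat with (g + 1)%nat by lia.
      replace (S m - t)%nat with (g + 1)%nat by lia.
      replace (S (S m) - g)%nat with (t + 2)%nat in Hc by lia.
      replace (S (S m) - g - 1)%nat with (t + 1)%nat in Hc by lia.
      replace (t + 1 + 1)%nat with (t + 2)%nat by lia.
      replace (t + 2 - 1)%nat with (t + 1)%nat in Hc by lia. nra.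
Qed.
Lemma key (fb A : R -> R) (Rr G : R) :
  0 < Rr -> 0 < G ->
  (forall x, derivable_pt_lim A x (fb x)) ->
  A 1 - A 0 = Rr ->
  (forall p, 0 <= p <= 1 -> fb p <= 1) ->
  (forall p, 0 < p <= 1 - exp (- (G / Rr)) -> 1 - exp (- (G / Rr) * fb p) < p) ->
  G < 1 - exp (- (G / Rr)).
Proof.
intros HR HG Hd HA Hb Hit.
set (c := G / Rr).
assert (Hc : 0 < c) by (unfold c; apply Rdiv_lt_0_compat; lra).
set (p0 := 1 - exp (- c)).
assert (He : exp (- c) < 1). { rewrite <- exp_0. apply exp_increasing. lra. }
assert (He0 := exp_pos (- c)).
assert (Hp0 : 0 < p0 < 1) by (unfold p0; lra).
assert (Hpt : forall p, 0 < p <= p0 -> fb p < - ln (1 - p) / c).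
{ intros p Hp. specialize (Hit p Hp). fold c in Hit.
  assert (H1 : ln (1 - p) < ln (exp (- c * fb p))).
  { apply ln_increasing; lra. }
  rewrite ln_exp in H1.
  apply (Rmult_lt_reg_r c); [lra|]. replace (- ln (1 - p) / c * c) with (- ln (1 - p)) by (field; lra). nra. }
set (B := fun x => ((1 - x) * ln (1 - x) + x) / c).
assert (HB : forall x, x < 1 -> derivable_pt_lim B x (- ln (1 - x) / c)).
{ intros x Hx. apply is_derive_Reals. unfold B. auto_derive.
  - lra.
  - replace (1 + - x) with (1 - x) by ring. unfold c. field. repeat split; lra. }
destruct (MVT_cor2 (fun x => B x - A x) (fun x => - ln (1 - x) / c - fb x) 0 p0)
  as [xi [Hxi1 Hxi2]]; [lra| |].
{ intros x Hx. apply derivable_pt_lim_minus; [apply HB; lra| apply Hd]. }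
assert (Hxi3 : 0 < - ln (1 - xi) / c - fb xi) by (specialize (Hpt xi); lra).
assert (Hxi4 : 0 < (- ln (1 - xi) / c - fb xi) * (p0 - 0)) by (apply Rmult_lt_0_compat; lra).
destruct (MVT_cor2 A fb p0 1) as [xi' [Hx1 Hx2]]; [lra| intros; apply Hd |].
assert (Hfb : fb xi' * (1 - p0) <= 1 * (1 - p0)).
{ apply Rmult_le_compat_r; [lra| apply Hb; lra]. }
assert (HB0 : B 0 = 0). { unfold B. rewrite Rminus_0_r ln_1. field. lra. }
assert (HBp0 : B p0 = - exp (- c) + p0 / c).
{ unfold B. replace (1 - p0) with (exp (- c)) by (unfold p0; ring).
  rewrite ln_exp. field. lra. }
assert (Hp0d : p0 = 1 - exp (- c)) by reflexivity.
assert (Hlt : Rr < p0 / c) by lra.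
unfold c in Hlt. unfold Rdiv in Hlt.
rewrite Rinv_mult Rinv_inv in Hlt.
assert (Hlt2 : Rr * 1 < Rr * (p0 / G)).
{ unfold Rdiv. lra. }
apply Rmult_lt_reg_l in Hlt2; [|lra].
apply (Rmult_lt_reg_r (/ G)); [apply Rinv_0_lt_compat; lra|].
rewrite Rinv_r; [|lra]. fold c. fold p0. unfold Rdiv in Hlt2. lra.
Qed.

Lemma convex_contra (Rr GG G : R) :
  0 < Rr -> 0 < GG -> GG = 1 - exp (- (GG / Rr)) -> GG < G ->
  G < 1 - exp (- (G / Rr)) -> False.
Proof.
intros HR HGG Heq Hlt Hp.
set (lam := GG / G).
assert (HG : 0 < G) by lra.
assert (Hl : 0 < lam < 1).
{ unfold lam. split; [apply Rdiv_lt_0_compat; lra|].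
  apply (Rmult_lt_reg_r G); [lra|]. unfold Rdiv. rewrite Rmult_assoc Rinv_l; lra. }
set (a := - (G / Rr)).
set (c0 := - (GG / Rr)).
assert (Hc0 : c0 = lam * a).
{ unfold c0, lam, a. field. split; lra. }
assert (T1 : exp c0 * (1 + (a - c0)) <= exp a).
{ replace (exp a) with (exp c0 * exp (a - c0)) by (rewrite <- exp_plus; f_equal; ring).
  apply Rmult_le_compat_l; [apply Rlt_le, exp_pos| apply exp_ineq1_le]. }
assert (T2 : exp c0 * (1 + (0 - c0)) <= exp 0).
{ replace (exp 0) with (exp c0 * exp (0 - c0)) by (rewrite <- exp_plus; f_equal; ring).
  apply Rmult_le_compat_l; [apply Rlt_le, exp_pos| apply exp_ineq1_le]. }
rewrite exp_0 in T2.
assert (T3 : exp c0 <= lam * exp a + (1 - lam)).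
{ assert (H1 : lam * (exp c0 * (1 + (a - c0))) <= lam * exp a) by (apply Rmult_le_compat_l; lra).
  assert (H2 : (1 - lam) * (exp c0 * (1 + (0 - c0))) <= (1 - lam) * 1) by (apply Rmult_le_compat_l; lra).
  assert (E : lam * (exp c0 * (1 + (a - c0))) + (1 - lam) * (exp c0 * (1 + (0 - c0))) = exp c0).
  { rewrite Hc0. ring. }
  lra. }
fold c0 in Heq. fold a in Hp.
assert (T4 : 1 - GG <= lam * exp a + (1 - lam)) by lra.
assert (T5 : lam * (1 - exp a) <= GG) by lra.
assert (T6 : lam * G < lam * (1 - exp a)) by (apply Rmult_lt_compat_l; lra).
assert (T7 : lam * G = GG) by (unfold lam; field; lra).
lra.
Qed.
Lemma iter_lemma (fb : R -> R) (c p0 p : R) (u : nat -> R) :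
  0 < c -> (forall p q, 0 <= p -> p <= q -> q <= 1 -> fb p <= fb q) ->
  u 0%nat = p0 -> (forall l, u (S l) = 1 - exp (- c * fb (u l))) ->
  0 < p <= p0 -> p0 <= 1 -> p <= 1 - exp (- c * fb p) -> ~ Un_cv u 0.
Proof.
intros Hc Hm Hu0 HuS Hp Hp0 Hfix Hcv.
assert (Hall : forall l, p <= u l <= 1).
{ induction l as [|l IH].
  - rewrite Hu0; lra.
  - rewrite HuS. split.
    + assert (fb p <= fb (u l)) by (apply Hm; lra).
      assert (exp (- c * fb (u l)) <= exp (- c * fb p)).
      { destruct (Req_dec (fb p) (fb (u l))) as [E|E].
        - rewrite E; lra.
        - apply Rlt_le, exp_increasing. nra. }
      lra.
    + assert (0 < exp (- c * fb (u l))) by apply exp_pos. lra. }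
destruct (Hcv p ltac:(lra)) as [N HN].
specialize (HN N ltac:(lia)). unfold Rdist in HN.
rewrite Rminus_0_r in HN. specialize (Hall N).
rewrite Rabs_right in HN; lra.
Qed.

Lemma sum_opp (f : nat -> R) N : sum_f_R0 (fun t => - f t) N = - sum_f_R0 f N.
Proof. induction N as [|N IH]; simpl; [ring| rewrite IH; ring]. Qed.

Unset Implicit Arguments.

Theorem mainTheorem8
  (Rr GG : R) (hR0 : 0 < Rr) (hR1 : Rr < 1)
  (hGG0 : 0 < GG) (hGG1 : GG < 1) (hGGeq : GG = 1 - exp (- (GG / Rr)))
  (theta k : nat) (n : nat -> nat) (d : nat -> nat)
  (Gm : forall h : nat, 'M['F_2]_(k, n h)) (Lam : nat -> R)
  (htheta : (1 <= theta)%nat)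
  (hdim : forall h, (h < theta)%nat -> has_dim (Gm h))
  (hd : forall h, (h < theta)%nat -> (2 <= d h)%nat /\ min_dist_ge (Gm h) (d h))
  (hidle : forall h, (h < theta)%nat -> no_idle (Gm h))
  (hLam0 : forall h, (h < theta)%nat -> 0 <= Lam h)
  (hLam1 : sum_f_R0 Lam (theta - 1) = 1)
  (hrate : INR k / nbar theta Lam n = Rr) :
  exists Gstar, is_lub (threshold_set theta Gm Lam Rr) Gstar /\ Gstar <= GG.
Proof.
set (nb := nbar theta Lam n) in *.
assert (Hk : (0 < k)%nat).
{ destruct k as [|k']; [|lia]. simpl in hrate. unfold Rdiv in hrate. lra. }
assert (Hnh : forall h, (h <= theta - 1)%nat -> (0 < n h)%nat).
{ intros h Hh. have Hr := hdim h ltac:(lia). unfold has_dim in Hr.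
  have := rank_leq_col (Gm h). rewrite Hr. lia. }
assert (Hnb : 0 < nb).
{ assert (0 <= nb).
  { unfold nb, nbar. apply sum_nonneg. intros h Hh.
    apply Rmult_le_pos; [apply hLam0; lia| apply pos_INR]. }
  destruct (Req_dec nb 0) as [E|E]; [|lra].
  rewrite E in hrate. unfold Rdiv in hrate. rewrite Rinv_0 Rmult_0_r in hrate. lra. }
set (eh := fun h g => INR (etilde (Gm h) g)).
set (phi := fun h p => bern (psi (eh h) (n h)) (n h - 1) p).
set (fb := f_b theta Gm Lam).
assert (Hfb : forall p, fb p = / nb * sum_f_R0 (fun h => Lam h * phi h p) (theta - 1)).
{ intros p. reflexivity. }
assert (Hconc : forall h, (h <= theta - 1)%nat -> forall g, (g + 2 <= n h)%nat ->
     INR (g + 2) * INR (g + 1) * eh h (g + 2)%nat + INR (n h - g) * INR (n h - g - 1) * eh h g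
     <= 2 * INR (g + 1) * INR (n h - g - 1) * eh h (g + 1)%nat).
{ intros h Hh g Hg. have Hc := etilde_concave (Gm h) (g := g) ltac:(lia).
  unfold eh. replace (n h - g - 1)%nat with (n h - g.+1)%nat by lia.
  rewrite !addn2 !addn1. move: Hc.
  set a := g.+2. set b := g.+1. set c := (n h - g)%nat. set dd := (n h - g.+1)%nat.
  set E2 := etilde (Gm h) a. set E0 := etilde (Gm h) g. set E1 := etilde (Gm h) b.
  clearbody E2 E0 E1 a b c dd.
  move/leP => Hc. apply le_INR in Hc. rewrite -!multE -!plusE !plus_INR !mult_INR in Hc.
  replace (INR 2) with 2 in Hc by (simpl; ring). lra. }
assert (Hmono : forall p q, 0 <= p -> p <= q -> q <= 1 -> fb p <= fb q).
{ intros p q H0 H1 H2. rewrite !Hfb. apply Rmult_le_compat_l.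
  - apply Rlt_le, Rinv_0_lt_compat, Hnb.
  - apply sum_Rle. intros h Hh. apply Rmult_le_compat_l; [apply hLam0; lia|].
    apply phi_mono; auto. apply Hnh; lia. apply Hconc. lia. }
assert (Hbd : forall p, 0 <= p <= 1 -> fb p <= 1).
{ intros p Hp. apply Rle_trans with (fb 1); [apply Hmono; lra|].
  rewrite Hfb. unfold phi. 
  apply Rle_trans with (/ nb * nb); [|rewrite Rinv_l; lra].
  apply Rmult_le_compat_l; [apply Rlt_le, Rinv_0_lt_compat, Hnb|].
  unfold nb, nbar. apply sum_Rle. intros h Hh.
  apply Rmult_le_compat_l; [apply hLam0; lia|].
  rewrite bern1. unfold psi, eh.
  replace (n h - (n h - 1))%nat with 1%nat by (have := Hnh h ltac:(lia); lia).
  replace (n h - 1 - (n h - 1))%nat with 0%nat by lia.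
  rewrite etilde0. simpl (INR 0). simpl (INR 1).
  have := etilde1 (Gm h). move/leP => H1. apply le_INR in H1. lra. }
set (A := fun p => - / nb * sum_f_R0 (fun h => Lam h * bern (fun t => eh h (n h - t)%nat) (n h) p) (theta - 1)).
assert (HdA : forall x, derivable_pt_lim A x (fb x)).
{ intros x. rewrite Hfb.
  replace (/ nb * sum_f_R0 (fun h => Lam h * phi h x) (theta - 1)) with
    (- / nb * sum_f_R0 (fun h => - (Lam h * phi h x)) (theta - 1))
    by (rewrite sum_opp; ring).
  apply (derivable_pt_lim_scal (fun p => sum_f_R0 (fun h => Lam h * bern (fun t => eh h (n h - t)%nat) (n h) p) (theta - 1))).
  apply (deriv_sum (fun h p => Lam h * bern (fun t => eh h (n h - t)%nat) (n h) p)
           (fun h x => - (Lam h * phi h x))).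
  intros h Hh.
  replace (- (Lam h * phi h x)) with (Lam h * (- phi h x)) by ring.
  apply (derivable_pt_lim_scal (bern (fun t => eh h (n h - t)%nat) (n h))).
  apply dEb. apply Hnh. lia. }
assert (HA : A 1 - A 0 = Rr).
{ unfold A. rewrite <- hrate.
  rewrite (sum_eq _ (fun h => Lam h * 0)); last first.
  { intros h Hh. rewrite bern1 subnn. unfold eh. rewrite etilde0. reflexivity. }
  rewrite (sum_eq (fun h => Lam h * bern _ (n h) 0) (fun h => Lam h * INR k)); last first.
  { intros h Hh. rewrite bern0 subn0. unfold eh. rewrite etilden.
    have := hdim h ltac:(lia). unfold has_dim. intros ->. reflexivity. }
  rewrite -(scal_sum Lam) -(scal_sum Lam) hLam1. unfold Rdiv. ring. }
assert (Hub : forall G, threshold_set theta Gm Lam Rr G -> G <= GG).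
{ intros G [HG0 Hcv]. destruct (Rle_lt_dec G GG) as [|Hlt]; [assumption|exfalso].
  assert (HG : 0 < G) by lra.
  set (c := G / Rr).
  assert (Hc : 0 < c) by (unfold c; apply Rdiv_lt_0_compat; lra).
  set (p0 := 1 - exp (- c)).
  assert (Hp01 : p0 <= 1) by (unfold p0; have := exp_pos (- c); lra).
  destruct (classic (exists p, 0 < p <= p0 /\ p <= 1 - exp (- c * fb p))) as [[p [Hp Hfix]]|Hno].
  - apply (iter_lemma fb c p0 p (p_seq theta Gm Lam Rr G)); auto.
  - apply (convex_contra Rr GG G); auto.
    apply (key fb A Rr G); auto.
    intros p Hp. apply Rnot_le_lt. intros Hle. apply Hno. exists p. split; [exact Hp| exact Hle]. }
assert (Hne : threshold_set theta Gm Lam Rr 0).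
{ split; [lra|].
  assert (Hz : forall l, p_seq theta Gm Lam Rr 0 l = 0).
  { intros [|l]; simpl; unfold f_s; unfold Rdiv; rewrite Rmult_0_l ?Ropp_0 ?Rmult_0_l exp_0; ring. }
  intros eps Heps. exists 0%nat. intros l _. unfold Rdist. rewrite Hz Rminus_0_r Rabs_R0. lra. }
destruct (completeness (threshold_set theta Gm Lam Rr)) as [m Hm].
- exists GG. intros G HG. apply Hub. exact HG.
- exists 0. exact Hne.
- exists m. split; [exact Hm|]. apply Hm. intros G HG. apply Hub. exact HG.
Qed.
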